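(* Let $R\in\mathcal R_{\rm s}^{n_y}$. Let $A$ be the nominal closed-loop matrix (the matrix $A_R$ with $R=I$), let $P=P^{\top}>0$ satisfy $AP+PA^{\top}+BB^{\top}=0$, let $P_R$ satisfy $A_RP_R+P_RA_R^{\top}+BB^{\top}=0$, and set $\Delta P_R=P_R-P$, $E_R=(I-R)C_{\rm m,o}$, $C_{\rm r}=[0,\ C_{\rm m,o}]$. Assume that $\|\Delta P_R\|_2\le\delta_R\|P\|_2$ for some $\delta_R\in[0,1)$ and that $\delta_R\,\kappa(P)<1$. Then $$\frac{\operatorname{tr}\{C_{\rm p}P_RC_{\rm p}^{\top}\}}{\operatorname{tr}\{C_{{\rm r},R}P_RC_{{\rm r},R}^{\top}\}}\le \frac{\kappa(P)(1+\delta_R)}{1-\delta_R\kappa(P)}\cdot\frac{\|C_{\rm p}\|_F^2}{\|E_R\|_F^2+\|C_{\rm r}\|_F^2}.$$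
   Context: Data: $A_{\rm p}\in\mathbb R^{n_x\times n_x}$, $B_{\rm p}\in\mathbb R^{n_x\times n_u}$, $B_w,B_{\hat w}\in\mathbb R^{n_x\times n_x}$, $C_{\rm m,o}\in\mathbb R^{n_y\times n_x}$, $C_{\rm p,o}\in\mathbb R^{n_{y_{\rm p}}\times n_x}$, $D_{\rm p,o}\in\mathbb R^{n_{y_{\rm p}}\times n_u}$, $K\in\mathbb R^{n_x\times n_y}$, $L\in\mathbb R^{n_u\times n_x}$, with $(A_{\rm p},B_{\rm p})$ controllable and $(A_{\rm p},C_{\rm m,o})$ observable. For $R\in\mathbb R^{n_y\times n_y}$: $$A_R=\begin{bmatrix}A_{\rm p}+B_{\rm p}L & -B_{\rm p}L\\ K(I-R)C_{\rm m,o} & A_{\rm p}-KC_{\rm m,o}\end{bmatrix},\quad B=\begin{bmatrix}B_w&0\\ B_w&-B_{\hat w}\end{bmatrix},$$ $C_{{\rm r},R}=[(R-I)C_{\rm m,o},\ C_{\rm m,o}]$, $C_{\rm p}=[C_{\rm p,o}+D_{\rm p,o}L,\ -D_{\rm p,o}L]$. So $A=A_I=\begin{bmatrix}A_{\rm p}+B_{\rm p}L & -B_{\rm p}L\\ 0 & A_{\rm p}-KC_{\rm m,o}\end{bmatrix}$. $\mathcal R_{\rm s}^{n_y}=\{R: A_R\text{ is Hurwitz}\}$. $\|\cdot\|_2$ is the spectral norm, $\|\cdot\|_F$ the Frobenius norm, and for symmetric positive definite $P$, $\kappa(P)=\lambda_{\max}(P)/\lambda_{\min}(P)$. *)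

(* Defs.v *)
From HB Require Import structures.
From mathcomp Require Import all_boot all_order all_algebra.
From mathcomp Require Import classical_sets reals.
From mathcomp Require Import complex.
Set Implicit Arguments. Unset Strict Implicit. Unset Printing Implicit Defensive.
Import Order.TTheory GRing.Theory Num.Theory.
Local Open Scope ring_scope.

Section Defs.
Variable R : realType.

Definition hurwitz n (M : 'M[R]_n) : Prop :=
  forall z : R[i], root (map_poly (fun x : R => x%:C%C) (char_poly M)) z ->
    Re z < 0.

Definition controllable n m (A : 'M[R]_n) (B : 'M[R]_(n, m)) : Prop :=
  \rank (\sum_(k < n) <<(A ^+ k *m B)^T>>)%MS = n.
Definition observable n p (A : 'M[R]_n) (C : 'M[R]_(p, n)) : Prop :=
  \rank (\sum_(k < n) <<C *m A ^+ k>>)%MS = n.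

Definition sym_pos_def n (P : 'M[R]_n) : Prop :=
  P^T = P /\ forall x : 'cV[R]_n, x != 0 -> 0 < (x^T *m P *m x) 0 0.

Definition lambda_max n (M : 'M[R]_n) : R := sup [set a : R | eigenvalue M a]%classic.
Definition lambda_min n (M : 'M[R]_n) : R := inf [set a : R | eigenvalue M a]%classic.
Definition kappa n (P : 'M[R]_n) : R := lambda_max P / lambda_min P.

Definition norm2 m n (M : 'M[R]_(m, n)) : R := Num.sqrt (lambda_max (M^T *m M)).
Definition normF m n (M : 'M[R]_(m, n)) : R :=
  Num.sqrt (\sum_i \sum_j (M i j) ^+ 2).

Variables (nx nu ny nyp : nat).
Variables (Ap : 'M[R]_nx) (Bp : 'M[R]_(nx, nu)) (Cmo : 'M[R]_(ny, nx))
  (Cpo : 'M[R]_(nyp, nx)) (Dpo : 'M[R]_(nyp, nu)) (K : 'M[R]_(nx, ny))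
  (L : 'M[R]_(nu, nx)).

Definition A_R (Rm : 'M[R]_ny) : 'M[R]_(nx + nx) :=
  block_mx (Ap + Bp *m L) (- (Bp *m L))
           (K *m (1%:M - Rm) *m Cmo) (Ap - K *m Cmo).
Definition Bcl (Bw Bwh : 'M[R]_nx) : 'M[R]_(nx + nx) :=
  block_mx Bw 0 Bw (- Bwh).
Definition C_rR (Rm : 'M[R]_ny) : 'M[R]_(ny, nx + nx) :=
  row_mx ((Rm - 1%:M) *m Cmo) Cmo.
Definition C_p : 'M[R]_(nyp, nx + nx) := row_mx (Cpo + Dpo *m L) (- (Dpo *m L)).
Definition C_r : 'M[R]_(ny, nx + nx) := row_mx 0 Cmo.
Definition E_R (Rm : 'M[R]_ny) : 'M[R]_(ny, nx) := (1%:M - Rm) *m Cmo.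

End Defs.

(* Main.v *)
Require Import Defs.
From HB Require Import structures.
From mathcomp Require Import all_boot all_order all_algebra.
From mathcomp Require Import classical_sets reals complex spectral sesquilinear.
From mathcomp Require Import ring lra.
Set Implicit Arguments. Unset Strict Implicit. Unset Printing Implicit Defensive.
Import Order.TTheory GRing.Theory Num.Theory.
Local Open Scope ring_scope.
Section S.
Local Open Scope sesquilinear_scope.
Variable R : realType.
Local Notation C := (R[i]).
Local Notation f := (real_complex R).
Lemma fr (a : R) : (f a)^* = f a.
Proof. by rewrite conj_Creal // complex_real. Qed.
Lemma xcR n (x : 'cV[R]_n) : (map_mx f x)^T = (map_mx f x) ^t*.
Proof. by apply/matrixP => i j; rewrite !mxE fr. Qed.
End S.
Section S2.
Local Open Scope sesquilinear_scope.
Variable R : realType.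
Local Notation C := (R[i]).
Local Notation f := (real_complex R).
Local Notation nC z := (complex.Re z ^+ 2 + complex.Im z ^+ 2).
Lemma step1 n (M : 'M[C]_n) (E : 'rV[C]_n) (x : 'cV[R]_n) :
  M \is unitarymx ->
  ((map_mx f x)^T *m (invmx M *m diag_mx E *m M) *m map_mx f x) =
  (M *m map_mx f x) ^t* *m diag_mx E *m (M *m map_mx f x).
Proof.
move=> Mu.
rewrite (invmx_unitary Mu).
rewrite xcR.
have h : (M *m map_mx f x) ^t* = (map_mx f x)^t* *m M^t*.
  by rewrite trmx_mul map_mxM.
by rewrite h !mulmxA.
Qed.
Lemma step2 (z e : C) : z^* * e * z = e * (nC z)%:C%C.
Proof. by rewrite add_Re2_Im2 normCK mulrAC [RHS]mulrC [z^* * z]mulrC. Qed.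

Lemma quad_diag n (M : 'M[C]_n) (E : 'rV[C]_n) (x : 'cV[R]_n) :
  M \is unitarymx ->
  ((map_mx f x)^T *m (invmx M *m diag_mx E *m M) *m map_mx f x) 0 0
  = \sum_i E 0 i * (nC ((M *m map_mx f x) i 0))%:C%C.
Proof.
move=> Mu; rewrite step1 // mul_mx_diag mxE; apply: eq_bigr => i _.
by rewrite !mxE step2.
Qed.

Lemma spec_rep n (S : 'M[R]_n) : S^T = S -> exists d : 'I_n -> R,
  (forall i, eigenvalue S (d i)) /\
  forall x : 'cV[R]_n, exists w : 'I_n -> R,
   [/\ forall i, 0 <= w i, (x^T *m x) 0 0 = \sum_i w i,
       (x^T *m S *m x) 0 0 = \sum_i d i * w i &
       (x^T *m (S *m S) *m x) 0 0 = \sum_i d i ^+ 2 * w i].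
Proof.
move=> Ssym.
set Sc := map_mx f S.
have herm : Sc \is hermsymmx.
  apply/is_hermitianmxP; rewrite expr0 scale1r.
  apply/matrixP => i j; rewrite !mxE fr.
  by rewrite -[in RHS]Ssym mxE.
have /orthomx_spectralP HS := hermitian_normalmx herm.
have Mu : spectralmx Sc \is unitarymx := spectral_unitarymx Sc.
have Dr : forall i, spectral_diag Sc 0 i \is Num.real.
  by move=> i; have /mxOverP := hermitian_spectral_diag_real herm; apply.
set M := spectralmx Sc in HS Mu; set D := spectral_diag Sc in HS Dr.
have Mun : M \in unitmx := unitarymx_unit Mu.
exists (fun i => complex.Re (D 0 i)).
have fd : forall i, f (complex.Re (D 0 i)) = D 0 i := fun i => RRe_real (Dr i).
split.
  move=> i; suff : root (char_poly Sc) (D 0 i).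
    by rewrite -(fd i) /Sc -map_char_poly fmorph_root eigenvalue_root_char.
  rewrite -eigenvalue_root_char; apply/eigenvalueP; exists (row i M).
    have : M *m Sc = diag_mx D *m M by rewrite HS !mulmxA mulmxV // mul1mx.
    move=> /(congr1 (row i)); rewrite row_mul => ->.
    by rewrite mul_diag_mx; apply/rowP => j; rewrite !mxE.
  apply/eqP => h.
  have := congr1 (row i) (unitarymxP Mu); rewrite row_mul h mul0mx.
  move=> /rowP/(_ i); rewrite !mxE eqxx /= => /eqP; rewrite eq_sym oner_eq0.
  by [].
move=> x.
have mapq : forall A : 'M[R]_n, f ((x^T *m A *m x) 0 0) =
    ((map_mx f x)^T *m map_mx f A *m map_mx f x) 0 0.
  by move=> A; rewrite map_trmx -!map_mxM [RHS]mxE.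
exists (fun i => nC ((M *m map_mx f x) i 0)); split.
- by move=> i; rewrite addr_ge0 // sqr_ge0.
- apply: complexI; rewrite rmorph_sum /=.
  have -> : x^T *m x = x^T *m 1%:M *m x by rewrite mulmx1.
  rewrite mapq map_mx1.
  have -> : (1%:M : 'M[C]_n) = invmx M *m diag_mx (const_mx 1) *m M.
    by rewrite diag_const_mx mulmx1 mulVmx.
  rewrite quad_diag //; apply: eq_bigr => i _; rewrite mxE mul1r.
  by [].
- apply: complexI; rewrite rmorph_sum /= mapq -/Sc HS quad_diag //.
  apply: eq_bigr => i _; rewrite rmorphM /= fd.
  by [].
- apply: complexI; rewrite rmorph_sum /= mapq map_mxM -/Sc HS.
  have -> : invmx M *m diag_mx D *m M *m (invmx M *m diag_mx D *m M) =
     invmx M *m diag_mx (\row_j (D 0 j * D 0 j)) *m M.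
    by rewrite -mulmx_diag !mulmxA mulmxK.
  rewrite quad_diag //; apply: eq_bigr => i _; rewrite mxE rmorphM rmorphXn /= fd.
  by rewrite expr2.
Qed.
End S2.

Section S3.
Variable R : realType.

Lemma sumsq_gt0 n (v : 'rV[R]_n) : v != 0 -> 0 < (v *m v^T) 0 0.
Proof.
move=> vn0.
have Hge : forall j : 'I_n, true -> 0 <= v 0 j * v^T j 0.
  by move=> j _; rewrite mxE -expr2 sqr_ge0.
rewrite mxE lt_def sumr_ge0 ?andbT //.
apply/negP => /eqP/(psumr_eq0P Hge) H; move/negP: vn0; apply; apply/eqP/rowP => j.
have := H j isT; rewrite !mxE -expr2 => /eqP; rewrite sqrf_eq0 => /eqP.
by move=> ->.
Qed.

Lemma eig_quad n (A : 'M[R]_n) a : eigenvalue A a ->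
  exists x : 'cV_n, 0 < (x^T *m x) 0 0 /\ (x^T *m A *m x) 0 0 = a * (x^T *m x) 0 0.
Proof.
move=> /eigenvalueP [v Hv vn0]; exists v^T; rewrite trmxK; split.
  exact: sumsq_gt0.
by rewrite Hv -scalemxAl mxE.
Qed.


Lemma sym_spec n (S : 'M[R]_n) : S^T = S -> exists d : 'I_n -> R,
  [/\ forall i, eigenvalue S (d i),
      forall i, lambda_min S <= d i /\ d i <= lambda_max S &
  forall x : 'cV[R]_n, exists w : 'I_n -> R,
   [/\ forall i, 0 <= w i, (x^T *m x) 0 0 = \sum_i w i,
       (x^T *m S *m x) 0 0 = \sum_i d i * w i &
       (x^T *m (S *m S) *m x) 0 0 = \sum_i d i ^+ 2 * w i]].
Proof.
move=> Ssym; have [d [Hd Hw]] := spec_rep Ssym.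
exists d; split => //.
set B := \sum_i `|d i|.
have dB : forall i, - B <= d i <= B.
  by move=> i; rewrite -ler_norml /B (bigD1 i) //= lerDl sumr_ge0.
have Hub : has_ubound [set a | eigenvalue S a]%classic.
  exists B => a /= /eig_quad [x [Xp Hx]].
  have [w [w0 Hs Hq _]] := Hw x.
  rewrite -(ler_pM2r Xp) -Hx Hq Hs mulr_sumr.
  apply: ler_sum => i _; apply: ler_wpM2r => //.
  by case/andP: (dB i).
have Hlb : has_lbound [set a | eigenvalue S a]%classic.
  exists (- B) => a /= /eig_quad [x [Xp Hx]].
  have [w [w0 Hs Hq _]] := Hw x.
  rewrite -(ler_pM2r Xp) -Hx Hq Hs mulr_sumr.
  apply: ler_sum => i _; apply: ler_wpM2r => //.
  by case/andP: (dB i).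
move=> i; split.
  exact: (ge_inf Hlb (Hd i)).
exact: (ub_le_sup Hub (Hd i)).
Qed.

Lemma sym_bounds n (S : 'M[R]_n) : S^T = S ->
  (forall x : 'cV_n, (x^T *m S *m x) 0 0 <= lambda_max S * (x^T *m x) 0 0) /\
  (forall x : 'cV_n, lambda_min S * (x^T *m x) 0 0 <= (x^T *m S *m x) 0 0).
Proof.
move=> Ssym; have [d [Hd Hb Hw]] := sym_spec Ssym.
split => x; have [w [w0 Hs Hq _]] := Hw x; rewrite Hq Hs mulr_sumr;
  apply: ler_sum => i _; apply: ler_wpM2r => //; case: (Hb i).
  by [].
by [].
Qed.


Lemma sumsq_ge0 n (x : 'cV[R]_n) : 0 <= (x^T *m x) 0 0.
Proof. by rewrite mxE sumr_ge0 // => j _; rewrite mxE -expr2 sqr_ge0. Qed.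

Lemma cs_real (X Y s : R) : (forall t, 0 <= t ^+ 2 * X - 2 * t * s + Y) ->
  0 <= X -> s ^+ 2 <= X * Y.
Proof.
move=> H X0; have Y0 : 0 <= Y by have := H 0; rewrite expr0n /= !mul0r !mulr0 mul0r subr0 add0r.
have [Xz|Xp] := eqVneq X 0.
  have [sz|sn] := eqVneq s 0; first by rewrite sz Xz expr0n mul0r.
  have := H ((Y + 1) / (2 * s)); rewrite Xz mulr0 add0r.
  have -> : 2 * ((Y + 1) / (2 * s)) * s = Y + 1.
    by field.
  lra.
have Xpos : 0 < X by rewrite lt_def Xp X0.
have := H (s / X).
have -> : (s / X) ^+ 2 * X - 2 * (s / X) * s + Y = Y - s ^+ 2 / X by field.
rewrite subr_ge0 ler_pdivrMr // => h; rewrite mulrC; exact: h.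
Qed.

Lemma norm2_quad m n (M : 'M[R]_(m, n)) (x : 'cV_n) :
  ((M *m x)^T *m (M *m x)) 0 0 <= norm2 M ^+ 2 * (x^T *m x) 0 0.
Proof.
have Ssym : (M^T *m M)^T = M^T *m M by rewrite trmx_mul trmxK.
have [Hup _] := sym_bounds Ssym.
have -> : (M *m x)^T *m (M *m x) = x^T *m (M^T *m M) *m x by rewrite trmx_mul !mulmxA.
apply: (le_trans (Hup x)); rewrite /norm2.
have [l0|ln] := lerP 0 (lambda_max (M^T *m M)).
  by rewrite sqr_sqrtr.
rewrite ler0_sqrtr ?(ltW ln) // expr0n mul0r.
by rewrite mulr_le0_ge0 ?(ltW ln) ?sumsq_ge0.
Qed.

Lemma quad_cross n (D : 'M[R]_n) (x : 'cV_n) :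
  `|(x^T *m D *m x) 0 0| <= norm2 D * (x^T *m x) 0 0.
Proof.
set s := (x^T *m D *m x) 0 0; set X := (x^T *m x) 0 0.
set Y := ((D *m x)^T *m (D *m x)) 0 0.
have HY : Y <= norm2 D ^+ 2 * X := norm2_quad D x.
have X0 : 0 <= X := sumsq_ge0 x.
have N0 : 0 <= norm2 D by rewrite /norm2 sqrtr_ge0.
have H : forall t, 0 <= t ^+ 2 * X - 2 * t * s + Y.
  move=> t; have := sumsq_ge0 (t *: x - D *m x).
  have E1 : (t *: x - D *m x)^T = t *: x^T - (D *m x)^T.
    by apply/matrixP => i j; rewrite !mxE.
  rewrite E1 mulmxBl !mulmxBr -!scalemxAl -!scalemxAr scalerA -expr2 opprB addrA addrAC.
  have eD : forall A B : 'M[R]_1, (A + B) 0 0 = A 0 0 + B 0 0 by move=> A B; rewrite mxE.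
  have eN : forall A : 'M[R]_1, (- A) 0 0 = - A 0 0 by move=> A; rewrite mxE.
  have eZ : forall (c : R) (A : 'M[R]_1), (c *: A) 0 0 = c * A 0 0 by move=> c A; rewrite mxE.
  have Ex : ((D *m x)^T *m x) 0 0 = s.
    have T : (((D *m x)^T *m x)^T) 0 0 = ((D *m x)^T *m x) 0 0 by rewrite mxE.
    by rewrite -T trmx_mul trmxK mulmxA.
  rewrite !eD !eN !eZ Ex -/X -/Y mulmxA -/s.
  lra.
have := cs_real H X0 => hs.
have c0 : 0 <= norm2 D * X by rewrite mulr_ge0.
rewrite ler_norml; apply/andP; split; nra.
Qed.

Lemma pd_facts n (P : 'M[R]_n) : sym_pos_def P -> (0 < n)%N ->
  [/\ 0 < lambda_min P, lambda_min P <= lambda_max P & norm2 P <= lambda_max P].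
Proof.
case=> Psym Ppos n0.
have [d [Hd Hb Hw]] := sym_spec Psym.
have dpos : forall i, 0 < d i.
  move=> i; have /eig_quad [x [Xp Hx]] := Hd i.
  have xn0 : x != 0 by apply: contraTneq Xp => ->; rewrite mulmx0 mxE ltxx.
  by have := Ppos x xn0; rewrite Hx pmulr_lgt0.
set m := (1 + \sum_i (d i)^-1)^-1.
have Sp : 0 < 1 + \sum_i (d i)^-1.
  have : 0 <= \sum_i (d i)^-1 by apply: sumr_ge0 => i _; rewrite invr_ge0 ltW.
  lra.
have mpos : 0 < m by rewrite invr_gt0.
have dm : forall i, m <= d i.
  move=> i; rewrite /m -[d i]invrK lef_pV2 ?posrE ?invr_gt0 //.
  rewrite (bigD1 i) //=.
  have : 0 <= \sum_(j | j != i) (d j)^-1 by apply: sumr_ge0 => j _; rewrite invr_ge0 ltW.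
  lra.
pose i0 : 'I_n := Ordinal n0.
have lmin : m <= lambda_min P.
  apply: lb_le_inf; first by exists (d i0); exact: Hd.
  move=> a /= /eig_quad [x [Xp Hx]]; have [w [w0 Hs Hq _]] := Hw x.
  rewrite -(ler_pM2r Xp) -Hx Hq Hs mulr_sumr; apply: ler_sum => i _.
  exact: ler_wpM2r.
have [b1 b2] := Hb i0.
have lpos : 0 < lambda_min P := lt_le_trans mpos lmin.
have lmax0 : 0 < lambda_max P := lt_le_trans lpos (le_trans b1 b2).
split => //; first exact: le_trans b1 b2.
rewrite /norm2 Psym.
rewrite -(ger0_norm (ltW lmax0)) -sqrtr_sqr; apply: ler_wsqrtr.
have [E0|En] := eqVneq [set a | eigenvalue (P *m P) a]%classic set0.
  by rewrite {1}/lambda_max E0 sup0 sqr_ge0.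
apply: ge_sup; first exact/set0P.
move=> a /= /eig_quad [x [Xp Hx]]; have [w [w0 Hs _ Hq2]] := Hw x.
rewrite -(ler_pM2r Xp) -Hx Hq2 Hs mulr_sumr; apply: ler_sum => i _.
apply: ler_wpM2r => //.
have [_ h] := Hb i; have := dpos i => hp; by rewrite !expr2 ler_pM // ltW.
Qed.
End S3.

Section S4.
Variable R : realType.

Lemma normF_sq m n (A : 'M[R]_(m, n)) :
  normF A ^+ 2 = \sum_i (row i A *m (row i A)^T) 0 0.
Proof.
rewrite /normF sqr_sqrtr; last by apply: sumr_ge0 => i _; apply: sumr_ge0 => j _; rewrite sqr_ge0.
apply: eq_bigr => i _; rewrite mxE; apply: eq_bigr => j _; rewrite !mxE expr2.
by [].
Qed.

Lemma trace_rows m n (C : 'M[R]_(m, n)) (Q : 'M[R]_n) :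
  \tr (C *m Q *m C^T) = \sum_i (row i C *m Q *m (row i C)^T) 0 0.
Proof.
apply: eq_bigr => i _; rewrite !mxE; apply: eq_bigr => k _; rewrite !mxE.
congr (_ * _); apply: eq_bigr => l _; rewrite !mxE.
by [].
Qed.

Lemma trace_bounds N k (Q : 'M[R]_N) (lo hi : R) (C : 'M[R]_(k, N)) :
  (forall x : 'cV_N, lo * (x^T *m x) 0 0 <= (x^T *m Q *m x) 0 0 /\
                     (x^T *m Q *m x) 0 0 <= hi * (x^T *m x) 0 0) ->
  lo * normF C ^+ 2 <= \tr (C *m Q *m C^T) /\ \tr (C *m Q *m C^T) <= hi * normF C ^+ 2.
Proof.
move=> H; rewrite normF_sq trace_rows !mulr_sumr; split; apply: ler_sum => i _;
  have [h1 h2] := H (row i C)^T; rewrite trmxK in h1 h2.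
  exact: h1.
exact: h2.
Qed.

Lemma mx_dim0 m n (A : 'M[R]_(m, n)) : n = 0%N -> A = 0.
Proof. by move=> n0; apply/matrixP => i [j hj]; exfalso; rewrite n0 in hj. Qed.


Lemma normF_sq2 m n (A : 'M[R]_(m, n)) : normF A ^+ 2 = \sum_i \sum_j A i j ^+ 2.
Proof.
by rewrite /normF sqr_sqrtr //; apply: sumr_ge0 => i _; apply: sumr_ge0 => j _; rewrite sqr_ge0.
Qed.

Lemma normF_split (nx ny : nat) (Cmo : 'M[R]_(ny, nx)) (Rm : 'M[R]_ny) :
  normF (C_rR Cmo Rm) ^+ 2 = normF (E_R Cmo Rm) ^+ 2 + normF (C_r Cmo) ^+ 2.
Proof.
rewrite !normF_sq2 -big_split /=; apply: eq_bigr => i _.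
rewrite /C_rR /E_R /C_r !big_split_ord /=.
rewrite [X in X + _ = _](eq_bigr (fun j => ((Rm - 1%:M) *m Cmo) i j ^+ 2)); last by move=> j _; rewrite row_mxEl.
rewrite [X in _ + X = _](eq_bigr (fun j => Cmo i j ^+ 2)); last by move=> j _; rewrite row_mxEr.
rewrite [X in _ = _ + (X + _)](eq_bigr (fun j => 0)); last by move=> j _; rewrite row_mxEl mxE expr0n.
rewrite [X in _ = _ + (_ + X)](eq_bigr (fun j => Cmo i j ^+ 2)); last by move=> j _; rewrite row_mxEr.
rewrite big1_eq add0r; congr (_ + _); apply: eq_bigr => j _.
by rewrite -opprB mulNmx mxE sqrrN.
Qed.

Lemma final_alg (T1 T2 F1 F2 lo hi : R) : 0 < lo -> 0 <= hi -> 0 <= F1 -> 0 <= F2 ->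
  lo * F1 <= T1 -> T1 <= hi * F1 -> lo * F2 <= T2 -> T2 <= hi * F2 ->
  T1 / T2 <= hi / lo * (F1 / F2).
Proof.
move=> lo0 hi0 F10 F20 _ U1 L2 U2.
have [F2z|F2p] := eqVneq F2 0.
  have T2z : T2 = 0 by apply/le_anti; rewrite -{1}(mulr0 hi) -{2}(mulr0 lo) -F2z U2 L2.
  by rewrite T2z F2z !invr0 !mulr0.
have F2pos : 0 < F2 by rewrite lt_def F2p F20.
have loF2 : 0 < lo * F2 by rewrite mulr_gt0.
have T2pos : 0 < T2 := lt_le_trans loF2 L2.
apply: (@le_trans _ _ (hi * F1 / T2)).
  by rewrite ler_wpM2r // invr_ge0 ltW.
apply: (@le_trans _ _ (hi * F1 / (lo * F2))).
  by rewrite ler_wpM2l ?mulr_ge0 // lef_pV2 ?posrE.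
by rewrite invfM mulrACA.
Qed.
End S4.

Theorem theorem1 (R : realType) (nx nu ny nyp : nat)
  (Ap : 'M[R]_nx) (Bp : 'M[R]_(nx, nu)) (Bw Bwh : 'M[R]_nx)
  (Cmo : 'M[R]_(ny, nx)) (Cpo : 'M[R]_(nyp, nx)) (Dpo : 'M[R]_(nyp, nu))
  (K : 'M[R]_(nx, ny)) (L : 'M[R]_(nu, nx))
  (Hctrb : controllable Ap Bp) (Hobs : observable Ap Cmo)
  (Rm : 'M[R]_ny)
  (HRs : hurwitz (A_R Ap Bp Cmo K L Rm))
  (P PR : 'M[R]_(nx + nx))
  (HPpd : sym_pos_def P)
  (HP : A_R Ap Bp Cmo K L 1%:M *m P + P *m (A_R Ap Bp Cmo K L 1%:M)^T
        + Bcl Bw Bwh *m (Bcl Bw Bwh)^T = 0)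
  (HPR : A_R Ap Bp Cmo K L Rm *m PR + PR *m (A_R Ap Bp Cmo K L Rm)^T
        + Bcl Bw Bwh *m (Bcl Bw Bwh)^T = 0)
  (deltaR : R) (Hd0 : 0 <= deltaR) (Hd1 : deltaR < 1)
  (HdP : norm2 (PR - P) <= deltaR * norm2 P)
  (Hdk : deltaR * kappa P < 1) :
  \tr (C_p Cpo Dpo L *m PR *m (C_p Cpo Dpo L)^T)
    / \tr (C_rR Cmo Rm *m PR *m (C_rR Cmo Rm)^T)
  <= kappa P * (1 + deltaR) / (1 - deltaR * kappa P)
     * ((normF (C_p Cpo Dpo L)) ^+ 2
        / ((normF (E_R Cmo Rm)) ^+ 2 + (normF (C_r Cmo)) ^+ 2)).

Proof.
set Cp := C_p Cpo Dpo L; set Cr := C_rR Cmo Rm.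
have [N0|Npos] := posnP (nx + nx).
  have -> : Cp = 0 := mx_dim0 _ N0.
  rewrite !mul0mx mxtrace0 mul0r normF_sq2.
  rewrite (eq_bigr (fun i => 0)); last first.
    by move=> i _; apply: big1 => j _; rewrite mxE expr0n.
  by rewrite big1_eq mul0r mulr0.
have [lpos lle n2le] := pd_facts HPpd Npos.
have [PsymT _] := HPpd.
have [HupP HloP] := sym_bounds PsymT.
have nDle : norm2 (PR - P) <= deltaR * lambda_max P := le_trans HdP (ler_wpM2l Hd0 n2le).
have Hx : forall x : 'cV_(nx + nx),
    (lambda_min P - deltaR * lambda_max P) * (x^T *m x) 0 0 <= (x^T *m PR *m x) 0 0 /\
    (x^T *m PR *m x) 0 0 <= (1 + deltaR) * lambda_max P * (x^T *m x) 0 0.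
  move=> x.
  have e : (x^T *m PR *m x) 0 0 = (x^T *m P *m x) 0 0 + (x^T *m (PR - P) *m x) 0 0.
    by rewrite -{1}(subrK P PR) mulmxDr mulmxDl mxE addrC.
  have h1 := HupP x; have h2 := HloP x; have h3 := quad_cross (PR - P) x.
  have X0 := sumsq_ge0 x.
  have h4 := ler_wpM2r X0 nDle.
  move: h3; rewrite ler_norml => /andP [h5 h6].
  rewrite e; split; nra.
have [L1 U1] := trace_bounds Cp Hx.
have [L2 U2] := trace_bounds Cr Hx.
rewrite -(normF_split Cmo Rm) -/Cr.
have lopos : 0 < lambda_min P - deltaR * lambda_max P.
  move: Hdk; rewrite /kappa mulrA ltr_pdivrMr // mul1r; lra.
have amax : 0 < lambda_max P := lt_le_trans lpos lle.
have HK : kappa P * (1 + deltaR) / (1 - deltaR * kappa P) =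
    (1 + deltaR) * lambda_max P / (lambda_min P - deltaR * lambda_max P).
  rewrite /kappa; move: (lambda_min P) (lambda_max P) lpos lopos => l u hl hlu.
  by field; rewrite (gt_eqF hlu) (gt_eqF hl).
rewrite HK.
have hi0 : 0 <= (1 + deltaR) * lambda_max P by rewrite mulr_ge0 // ?ltW //; lra.
apply: final_alg => //; by rewrite sqr_ge0.
Qed.
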